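(* Let $M=\mathbb{R}/\mathbb{Z}$, $\pi_M:\mathbb{R}\to M$ the canonical projection, $I_0=\pi_M([\tfrac14,\tfrac34])$, and let $f_0:M\to M$ be a $\mathscr{C}^r$ diffeomorphism ($r\ge1$) with $f_0(x)=\tfrac12x+\tfrac14\bmod1$ for $x\in I_0$. Let $(\Omega,\mathcal{F},\mathbb{P})$ be a probability space, $\kappa:\Omega\to\mathbb{R}$ a measurable function with values in $[-1,1]$ $\mathbb{P}$-almost surely, $0<\epsilon<\tfrac18$, and $f_\omega(x)=f_0(x)+\epsilon\kappa(\omega)\bmod 1$. Let $\theta:\Omega\to\Omega$ be measurably invertible and nonsingular with respect to $\mathbb{P}$, and let $f^{(n)}_\omega=f_{\theta^{n-1}\omega}\circ\cdots\circ f_\omega$ ($f^{(0)}_\omega=\mathrm{id}_M$). Suppose that $\theta$ is non-historic. Then for $\mathbb{P}$-almost every $\omega$, the set of points of $I_0$ with historic behaviour at $\omega$ is empty (in particular, of zero Lebesgue measure).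
   Context: $\theta$ is nonsingular with respect to $\mathbb{P}$ if $\mathbb{P}(\theta^{-1}\Gamma)=1$ whenever $\Gamma$ is measurable with $\mathbb{P}(\Gamma)=1$. $\theta$ is historic if there is a measurable set $\Gamma$ with $\mathbb{P}(\Gamma)>0$ such that for each $\omega\in\Gamma$ there is an integrable function $b:\Omega\to\mathbb{R}$ for which $\lim_{n\to\infty}\frac1n\sum_{j=0}^{n-1}b(\theta^j\omega)$ does not exist; otherwise $\theta$ is non-historic. A point $x\in M$ has historic behaviour at $\omega$ if there is a continuous $\varphi:M\to\mathbb{R}$ such that $\lim_{n\to\infty}\frac1n\sum_{j=0}^{n-1}\varphi(f^{(j)}_\omega(x))$ does not exist. *)

(* Defs.v *)
From HB Require Import structures.
From mathcomp Require Import all_boot all_order all_algebra.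
From mathcomp Require Import all_classical all_reals all_analysis.
Set Implicit Arguments. Unset Strict Implicit. Unset Printing Implicit Defensive.
Import Order.TTheory GRing.Theory Num.Theory.
Import numFieldNormedType.Exports.
Local Open Scope classical_set_scope.
Local Open Scope ring_scope.

(* The circle M = R/Z is handled through lifts: a real x represents pi_M(x).
   A map of M is given by a lift F : R -> R; a function on M is a 1-periodic
   function on R. *)

Definition Cr {R : realType} (r : nat) (F : R -> R) : Prop :=
  (forall k, (k < r)%N -> forall x, derivable (iter k (fun g : R -> R => (derive1 (g : R -> R^o))) F) x 1) /\
  continuous (iter r (fun g : R -> R => (derive1 (g : R -> R^o))) F).

Definition circle_Cr_diffeo_lift {R : realType} (r : nat) (F : R -> R) : Prop :=
  Cr r F /\ (forall x, derive1 (F : R -> R^o) x != 0) /\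
  exists2 d : R, (d = 1 \/ d = -1) & forall x, F (x + 1) = F x + d.

Definition birkhoff_avg {X : Type} {Rr : realType} (T : X -> X) (g : X -> Rr)
  (x : X) (n : nat) : Rr :=
  (n%:R)^-1 * \sum_(j < n) g (iter j T x).

Definition nonsingular {d} {Om : measurableType d} {R : realType}
  (P : probability Om R) (theta : Om -> Om) : Prop :=
  forall G : set Om, measurable G -> P G = 1%E -> P (theta @^-1` G) = 1%E.

Definition measurably_invertible {d} {Om : measurableType d}
  (theta : Om -> Om) : Prop :=
  measurable_fun setT theta /\
  exists2 thinv : Om -> Om, measurable_fun setT thinv &
    cancel theta thinv /\ cancel thinv theta.

Definition historic {d} {Om : measurableType d} {R : realType}
  (P : probability Om R) (theta : Om -> Om) : Prop :=
  exists2 G : set Om, measurable G /\ (0 < P G)%E &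
    forall w, G w -> exists b : Om -> R,
      P.-integrable setT (EFin \o b) /\
      ~ (exists l : R, birkhoff_avg theta b w n @[n --> \oo] --> l).

Definition non_historic {d} {Om : measurableType d} {R : realType}
  (P : probability Om R) (theta : Om -> Om) : Prop := ~ historic P theta.

Definition rmap {Om : Type} {R : realType} (F0 : R -> R) (eps : R)
  (kappa : Om -> R) (w : Om) (x : R) : R := F0 x + eps * kappa w.

Fixpoint rcomp {Om : Type} {R : realType} (F0 : R -> R) (eps : R)
  (kappa : Om -> R) (theta : Om -> Om) (n : nat) (w : Om) (x : R) : R :=
  match n with
  | 0 => x
  | n.+1 => rmap F0 eps kappa (iter n theta w) (rcomp F0 eps kappa theta n w x)
  end.

(* x (representing pi_M(x)) has historic behaviour at w: there is a continuous
   phi : M -> R (= continuous 1-periodic phi : R -> R) whose averages along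
   the random orbit do not converge. *)
Definition historic_behaviour {Om : Type} {R : realType} (F0 : R -> R) (eps : R)
  (kappa : Om -> R) (theta : Om -> Om) (w : Om) (x : R) : Prop :=
  exists phi : R -> R, continuous phi /\ (forall y, phi (y + 1) = phi y) /\
    ~ (exists l : R,
         (fun n : nat => (n%:R)^-1 *
            \sum_(j < n) phi (rcomp F0 eps kappa theta j w x)) @ \oo --> l).

(* Main.v *)
From HB Require Import structures.
From mathcomp Require Import all_boot all_order all_algebra.
From mathcomp Require Import all_classical all_reals all_analysis.
From mathcomp Require Import ring lra.
From mathcomp Require Import measurable_realfun.
Set Implicit Arguments. Unset Strict Implicit. Unset Printing Implicit Defensive.
Import Order.TTheory GRing.Theory Num.Theory Num.Def.
Import numFieldNormedType.Exports.
Local Open Scope classical_set_scope.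
Local Open Scope ring_scope.
Require Import Defs.
Section S1.
Variable R : realType.
Definition mcauchy (u : nat -> R) := forall e : R, 0 < e -> exists M : nat,
  forall p q : nat, (M <= p)%N -> (M <= q)%N -> `|u p - u q| < e.

Lemma mcauchy_cvg u : mcauchy u -> exists l : R, u @ \oo --> l.
Proof.
move=> hu.
have : cvg (u @ \oo).
  apply: cauchy_cvg; apply: cauchy_exP => e e0.
  have [M hM] := hu e e0.
  exists (u M); exists M => // n /= Mn.
  rewrite -ball_normE /ball_ /=. exact: hM.
by move=> c; exists (lim (u @ \oo)).
Qed.

Lemma cvg_mcauchy u (l : R) : u @ \oo --> l -> mcauchy u.
Proof.
move=> /cvgrPdist_lt hu e e0.
have [M _ hM] := hu (e/2) (divr_gt0 e0 (ltr0Sn _ 1)).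
exists M => p q pM qM.
have h1 := hM p pM; have h2 := hM q qM.
rewrite /= in h1 h2.
have : `|u p - u q| <= `|l - u p| + `|l - u q|.
  rewrite (distrC l (u p)). 
  have -> : u p - u q = (u p - l) + (l - u q) by rewrite addrA subrK.
  exact: ler_normD.
move=> H; apply: (le_lt_trans H).
by rewrite [e]splitr ltrD.
Qed.
End S1.
Section S2.
Variable R : realType.
Lemma unifc (phi : R -> R) : continuous phi -> forall eta : R, 0 < eta ->
  exists2 delta : R, 0 < delta & forall y z, -2 <= y <= 2 -> `|y - z| < delta -> `|phi y - phi z| < eta.
Proof.
move=> cphi eta eta0.
have K : compact `[(-2 : R), 2] by exact: segment_compact.
move/compact_near_coveringP: K => K.
have [N _ hN] : \forall n \near \oo, `[(-2:R), 2] `<=` (fun x' => forall z, `|x' - z| < n.+1%:R^-1 -> `|phi x' - phi z| < eta).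
  apply: K => x _.
  have := cphi x. move=> /cvgrPdist_lt /(_ (eta/2) (divr_gt0 eta0 (ltr0Sn _ 1))).
  move=> /nbhs_ballP [r /= r0 hr].
  have r20 : 0 < r / 2 by rewrite divr_gt0.
  near=> x' n => z hz.
  have hx' : `|x - x'| < r / 2.
    near: x'. have := (@near_ball _ _ x (r/2) r20); apply: filterS => t; by rewrite -ball_normE.
  have hn : n.+1%:R^-1 < r / 2.
    near: n. exact: (near_infty_natSinv_lt (PosNum r20)).
  have hxz : `|x - z| < r.
    have -> : x - z = (x - x') + (x' - z) by rewrite addrA subrK.
    apply: (le_lt_trans (ler_normD _ _)). rewrite [r]splitr ltrD //.
    exact: lt_trans hz hn.
  have h1 := hr z; have h2 := hr x'.
  rewrite -ball_normE /= in h1 h2.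
  have := h1 hxz. have := h2 (lt_trans hx' _).
  have hr2 : r / 2 < r by rewrite ltr_pdivrMr // ltr_pMr // ltr1n.
  move=> /(_ hr2) a1 a2.
  have -> : phi x' - phi z = (phi x - phi z) - (phi x - phi x') by ring.
  apply: (le_lt_trans (ler_normB _ _)). rewrite [eta]splitr ltrD //.
exists N.+1%:R^-1; first by [].
  move=> y z hy; apply: (hN N) => //=.
Unshelve. all: by end_near.
Qed.
End S2.
Section S3.
Variables (R : realType) (d : measure_display) (Om : measurableType d) (P : probability Om R).
Variable theta : Om -> Om.
Hypothesis mtheta : measurable_fun setT theta.

Lemma iter_meas j : measurable_fun setT (iter j theta).
Proof.
elim: j => [|j IH] /=; first exact: measurable_id.
exact: (measurableT_comp mtheta IH).
Qed.

Lemma avg_meas (b : Om -> R) p : measurable_fun setT b ->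
  measurable_fun setT (fun w => birkhoff_avg theta b w p).
Proof.
move=> mb; rewrite /birkhoff_avg.
apply: measurable_funM; first exact: measurable_cst.
apply: measurable_sum => j.
exact: (measurableT_comp mb (iter_meas j)).
Qed.

Lemma meas_imp (Q : Prop) (A : set Om) : measurable A -> measurable [set w | Q -> A w].
Proof.
move=> mA; have [q|nq] := pselect Q.
  have -> : [set w | Q -> A w] = A; last exact: mA.
  by apply/seteqP; split => w /= H; [apply: H| move=> _].
have -> : [set w | Q -> A w] = setT; last exact: measurableT.
by apply/seteqP; split => w //= _.
Qed.

Lemma meas_lt (f g : Om -> R) (r : R) : measurable_fun setT f -> measurable_fun setT g ->
  measurable [set w | `|f w - g w| < r].
Proof.
move=> mf mg.
have mh : measurable_fun setT (fun w => `|f w - g w|).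
  exact: (measurableT_comp (@normr_measurable R setT) (measurable_funB mf mg)).
have -> : [set w | `|f w - g w| < r] = setT `&` (fun w => `|f w - g w|) @^-1` [set` `]-oo, r[].
  by apply/seteqP; split => w /=; rewrite in_itv /= => //; case.
by apply: mh => //; exact: measurable_itv.
Qed.

Definition kcauchy (u : nat -> R) := forall k : nat, exists M : nat,
  forall p q : nat, (M <= p)%N -> (M <= q)%N -> `|u p - u q| < k.+1%:R^-1.

Lemma kcauchyP u : kcauchy u <-> mcauchy u.
Proof.
split=> [h e e0|h k]; last by apply: h.
have [k hk] : exists k : nat, k.+1%:R^-1 < e.
  exists (truncn e^-1).
  by rewrite -ltf_pV2 ?(posrE,divr_gt0)// invrK truncnS_gt.
have [M hM] := h k; exists M => p q pM qM.
exact: lt_trans (hM p q pM qM) hk.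
Qed.

Lemma cauchy_meas (u : nat -> Om -> R) : (forall n, measurable_fun setT (u n)) ->
  measurable [set w | mcauchy (fun n => u n w)].
Proof.
move=> mu.
have -> : [set w | mcauchy (fun n => u n w)] =
  \bigcap_k \bigcup_M \bigcap_p \bigcap_q
     [set w | (M <= p)%N -> (M <= q)%N -> `|u p w - u q w| < k.+1%:R^-1].
  apply/seteqP; split => w /=.
    move=> /kcauchyP h k _.
    have [M hM] := h k; exists M => // p _ q _; exact: hM.
  move=> h; apply/kcauchyP => k.
  have [M _ hM] := h k I; exists M => p q; exact: hM p I q I.
apply: bigcapT_measurable => k; apply: bigcupT_measurable => M.
apply: bigcapT_measurable => p; apply: bigcapT_measurable => q.
have -> : [set w | (M <= p)%N -> (M <= q)%N -> `|u p w - u q w| < k.+1%:R^-1] =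
   [set w | ((M <= p)%N /\ (M <= q)%N) -> `|u p w - u q w| < k.+1%:R^-1].
  by apply/seteqP; split => w /=; [move=> H [] |move=> H a b; apply: H].
apply: meas_imp; exact: meas_lt.
Qed.

Lemma ae_cauchy (nh : non_historic P theta) (b : Om -> R) :
  measurable_fun setT b -> P.-integrable setT (EFin \o b) ->
  {ae P, forall w, mcauchy (birkhoff_avg theta b w)}.
Proof.
move=> mb ib.
have mC := cauchy_meas (fun n => avg_meas n mb).
exists (~` [set w | mcauchy (fun n => birkhoff_avg theta b w n)]); split => //.
- exact: measurableC.
- apply/eqP; rewrite eq_le measure_ge0 andbT leNgt; apply/negP => hpos.
  apply: nh; exists (~` [set w | mcauchy (fun n => birkhoff_avg theta b w n)]).
    by split => //; exact: measurableC.
  move=> w /= hw; exists b; split => // -[l hl].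
  by apply: hw; exact: cvg_mcauchy hl.
Qed.
End S3.
Section S4.
Variables (R : realType) (Om : Type) (F0 : R -> R) (eps : R) (kappa : Om -> R) (theta thinv : Om -> Om).
Hypothesis thK : cancel theta thinv.

Definition cc (w : Om) : R := 1/4 + eps * kappa w.

Fixpoint aseq (w : Om) (x : R) (n : nat) : R :=
  match n with 0 => x | n'.+1 => aseq w x n' / 2 + cc (iter n' theta w) end.

Fixpoint Bz (t : nat) (w : Om) (z : R) : R :=
  match t with 0 => z | t'.+1 => Bz t' (thinv w) z / 2 + cc (thinv w) end.

Lemma Bz_aseq w x t j : Bz t (iter (j + t) theta w) (aseq w x j) = aseq w x (j + t).
Proof.
elim: t j => [|t IH] j; first by rewrite addn0.
by rewrite addnS /= thK IH.
Qed.

Lemma Bz_diff t w z z' : Bz t w z - Bz t w z' = (z - z') / 2 ^+ t.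
Proof.
elim: t w => [|t IH] w /=; first by rewrite expr0 divr1.
have -> : Bz t (thinv w) z = Bz t (thinv w) z' + (z - z') / 2 ^+ t.
  by rewrite -(IH (thinv w)) addrC subrK.
rewrite exprS; field.
by rewrite expf_neq0.
Qed.

Lemma dyn (w : Om)
  (hF : forall y : R, 1/4 <= y <= 3/4 -> exists k : int, F0 y = y / 2 + 1/4 + k%:~R)
  (hper : forall (k : int) y, exists k' : int, F0 (y + k%:~R) = F0 y + k'%:~R)
  (he : 0 < eps < 1/8)
  (hk : forall j, -1 <= kappa (iter j theta w) <= 1) x (hx : 1/4 <= x <= 3/4) :
  forall n, 1/4 <= aseq w x n <= 3/4 /\
    exists k : int, rcomp F0 eps kappa theta n w x = aseq w x n + k%:~R.
Proof.
elim => [|n [ha [k hk']]] /=.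
  by split => //; exists 0; rewrite addr0.
have [k0 hk0] := hF _ ha.
have [k1 hk1] := hper k (aseq w x n).
move: (hk n) he ha => /andP[k1l k1u] /andP[e0 e1] /andP[al au].
have hek : - eps <= eps * kappa (iter n theta w) <= eps.
  apply/andP; split; nra.
move: hek => /andP[hl hu].
split.
  rewrite /cc; apply/andP; split; lra.
exists (k0 + k1); rewrite /rmap hk' hk1 hk0 /cc intrD.
ring.
Qed.
End S4.
Section S5.
Variable R : realType.

Lemma per_int (G : R -> R) (dd : R) : (forall x, G (x + 1) = G x + dd) ->
  forall (k : int) y, G (y + k%:~R) = G y + k%:~R * dd.
Proof.
move=> hG.
have hn : forall (n : nat) y, G (y + n%:R) = G y + n%:R * dd.
  elim=> [|n IH] y; first by rewrite !addr0 mul0r addr0.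
  by rewrite -natr1 addrA hG IH; ring.
case=> n y.
  by rewrite -pmulrn hn.
rewrite NegzE mulrNz -pmulrn.
have := hn n.+1 (y - n.+1%:R); rewrite subrK => ->; ring.
Qed.

Definition cell (N j : nat) : set R :=
  [set` `[(-1 + j%:R / N%:R), (-1 + j%:R / N%:R + N%:R^-1)[ ].

Lemma grid (N : nat) (y : R) : (0 < N)%N -> -1 <= y < 1 ->
  exists i : 'I_(2 * N), forall j : 'I_(2 * N), (y \in cell N j) = (j == i).
Proof.
move=> N0 /andP[y1 y2].
have Np : 0 < N%:R :> R by rewrite ltr0n.
set t := (y + 1) * N%:R.
have t0 : 0 <= t by rewrite /t mulr_ge0 // ?ler0n //; lra.
have t2 : t < (2 * N)%:R by rewrite /t natrM ltr_pM2r //; lra.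
have ilt : (truncn t < 2 * N)%N by rewrite truncn_lt_nat.
exists (Ordinal ilt) => j.
rewrite /cell mem_setE in_itv /= eq_sym -(inj_eq val_inj) /= truncn_eq //.
congr (_ && _).
  rewrite /t -ler_pdivrMr //. apply/idP/idP; lra.
rewrite /t -ltr_pdivlMr // -natr1 mulrDl mul1r.
apply/idP/idP; lra.
Qed.

Lemma avg_small (u : nat -> R) (eta : R) m : 0 < eta ->
  (forall j, (m <= j)%N -> `|u j| <= eta) ->
  exists n0, forall n, (n0 <= n)%N -> `|n%:R^-1 * \sum_(j < n) u j| <= 2 * eta.
Proof.
move=> e0 hu.
pose T n := \sum_(j < n) `|u j|.
have hT : forall n, (m <= n)%N -> T n <= T m + n%:R * eta.
  elim=> [|n IH] hmn.
    by move: hmn; rewrite leqn0 => /eqP ->; rewrite mul0r addr0.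
  move: hmn; rewrite leq_eqVlt => /orP[/eqP <-|hmn].
    by rewrite lerDl mulr_ge0 // ltW.
  rewrite /T big_ord_recr /= -/(T n).
  have := IH hmn; have := hu n hmn; rewrite -natr1 mulrDl mul1r; rewrite -/(T m); lra.
have Tm0 : 0 <= T m by rewrite /T sumr_ge0.
exists (maxn (maxn m 1) (truncn (T m / eta)).+1) => n.
rewrite !geq_max => /andP[/andP[mn n1] tn].
have np : 0 < n%:R :> R by rewrite ltr0n.
rewrite normrM ger0_norm ?invr_ge0 ?ler0n //.
apply: (le_trans (ler_wpM2l _ (ler_norm_sum _ _ _))); first by rewrite invr_ge0 ler0n.
rewrite -/(T n) ler_pdivrMl //.
apply: (le_trans (hT n mn)).
have : T m / eta < n%:R.
  apply: (lt_le_trans (truncnS_gt _)); by rewrite ler_nat.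
rewrite ltr_pdivrMr // => h.
nra.
Qed.

Lemma mcauchyD (u v : nat -> R) : mcauchy u -> mcauchy v -> mcauchy (fun n => u n + v n).
Proof.
move=> hu hv e e0.
have [M1 h1] := hu (e/2) (divr_gt0 e0 (ltr0Sn _ 1)).
have [M2 h2] := hv (e/2) (divr_gt0 e0 (ltr0Sn _ 1)).
exists (maxn M1 M2) => p q; rewrite !geq_max => /andP[p1 p2] /andP[q1 q2].
have -> : u p + v p - (u q + v q) = (u p - u q) + (v p - v q) by ring.
apply: (le_lt_trans (ler_normD _ _)); rewrite [e]splitr ltrD //; [exact: h1|exact: h2].
Qed.

Lemma mcauchyZ (u : nat -> R) (a : R) : mcauchy u -> mcauchy (fun n => a * u n).
Proof.
move=> hu e e0.
have ha : 0 < `|a| + 1 by rewrite ltr_wpDl.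
have [M h] := hu (e / (`|a| + 1)) (divr_gt0 e0 ha).
exists M => p q pM qM.
rewrite -mulrBr normrM.
have := h p q pM qM; rewrite ltr_pdivlMr // => H.
have hn := normr_ge0 (u p - u q).
have ha0 := normr_ge0 a.
nra.
Qed.

Lemma mcauchy_sum K (F : nat -> nat -> R) : (forall i, mcauchy (F i)) ->
  mcauchy (fun n => \sum_(i < K) F i n).
Proof.
move=> hF; elim: K => [|K IH].
  move=> e e0; exists 0%N => p q _ _; by rewrite !big_ord0 subrr normr0.
have -> : (fun n => \sum_(i < K.+1) F i n) = (fun n => \sum_(i < K) F i n + F K n).
  by apply: funext => n; rewrite big_ord_recr.
exact: mcauchyD.
Qed.

Lemma mcauchy_approx (A : nat -> R) :
  (forall eta, 0 < eta -> exists2 S : nat -> R, mcauchy S &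
     exists n0, forall n, (n0 <= n)%N -> `|A n - S n| <= eta) -> mcauchy A.
Proof.
move=> h e e0.
have e4 : 0 < e / 4 by rewrite divr_gt0.
have [S hS [n0 hn0]] := h _ e4.
have [M hM] := hS _ e4.
exists (maxn M n0) => p q; rewrite !geq_max => /andP[p1 p2] /andP[q1 q2].
have -> : A p - A q = (A p - S p) + (S p - S q) - (A q - S q) by ring.
have a1 := hn0 p p2; have a2 := hn0 q q2; have a3 := hM p q p1 q1.
apply: (le_lt_trans (ler_normB _ _)).
apply: (le_lt_trans (lerD (ler_normD _ _) (lexx _))).
lra.
Qed.
End S5.
Section S6.
Variables (R : realType) (d : measure_display) (Om : measurableType d) (P : probability Om R).

Lemma ae_forall_nat (Q : nat -> Om -> Prop) :
  (forall n, {ae P, forall w, Q n w}) -> {ae P, forall w, forall n, Q n w}.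
Proof.
move=> h.
apply: (negligibleS _ (negligible_bigcup (fun n => h n))).
move=> w /= hw; apply: contrapT => hn; apply: hw => n.
apply: contrapT => hq; apply: hn; exists n => //.
Qed.

Lemma nonsing_iter (theta : Om -> Om) : measurable_fun setT theta -> nonsingular P theta ->
  forall j (G : set Om), measurable G -> P G = 1%E -> P ((iter j theta) @^-1` G) = 1%E.
Proof.
move=> mth ns; elim=> [|j IH] G mG PG //.
have mG' : measurable (theta @^-1` G).
  by rewrite -[X in measurable X]setTI; apply: mth.
exact: (IH _ mG' (ns _ mG PG)).
Qed.
End S6.

Lemma preimE (A B : Type) (f : A -> B) (S : set B) (w : A) : (w \in f @^-1` S) = (f w \in S).
Proof. by apply/idP/idP; rewrite !in_setE. Qed.
Unset Implicit Arguments.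

Theorem proposition1p3 (R : realType) (r : nat) (F0 : R -> R)
  (d : measure_display) (Om : measurableType d) (P : probability Om R)
  (kappa : Om -> R) (eps : R) (theta : Om -> Om) :
  (1 <= r)%N ->
  circle_Cr_diffeo_lift r F0 ->
  (forall x : R, 1/4 <= x <= 3/4 ->
     exists k : int, F0 x = x / 2 + 1/4 + k%:~R) ->
  measurable_fun setT kappa ->
  {ae P, forall w, -1 <= kappa w <= 1} ->
  0 < eps < 1/8 ->
  measurably_invertible theta ->
  nonsingular P theta ->
  non_historic P theta ->
  {ae P, forall w, forall x : R, 1/4 <= x <= 3/4 ->
     ~ historic_behaviour F0 eps kappa theta w x}.
Proof.
move=> _ hF0 hF mk hk he minv nons nh.
case: hF0 => _ [_ [dd hdd hdd1]].
have hper : forall (k : int) y, exists k' : int, F0 (y + k%:~R) = F0 y + k'%:~R.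
  move=> k y; rewrite (per_int hdd1).
  case: hdd => ->; first by exists k; rewrite mulr1.
  by exists (- k); rewrite mulrN1 mulrNz.
case: minv => mth [thinv mthinv [thK _]].
have aek : {ae P, forall w, forall j, -1 <= kappa (iter j theta w) <= 1}.
  apply: ae_forall_nat => j.
  case: hk => N0 [mN0 PN0 hN0].
  have mC : measurable (~` N0) by exact: measurableC.
  have mpre : measurable ((iter j theta) @^-1` (~` N0)).
    by rewrite -[X in measurable X]setTI; apply: (iter_meas mth).
  exists (~` ((iter j theta) @^-1` (~` N0))); split.
  - exact: measurableC.
  - have P1 : P (~` N0) = 1%E by rewrite probability_setC // PN0 sube0.
    rewrite probability_setC // (nonsing_iter mth nons j mC P1) subee //.
  - move=> w /= hw hc; apply: hc; exact: hN0.
pose hm m := fun w => Bz eps kappa thinv m w 0.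
have mc : measurable_fun setT (cc eps kappa).
  apply: measurable_funD; first exact: measurable_cst.
  apply: measurable_funM => //; exact: measurable_cst.
have mhm : forall m, measurable_fun setT (hm m).
  rewrite /hm; elim=> [|m IH] /=; first exact: measurable_cst.
  apply: measurable_funD; last exact: (measurableT_comp mc mthinv).
  apply: measurable_funM; last exact: measurable_cst.
  exact: (measurableT_comp IH mthinv).
pose b m N i := (\1_(hm m @^-1` cell N i) : Om -> R).
have mpre : forall m N i, measurable (hm m @^-1` cell N i).
  move=> m N i; rewrite -[X in measurable X]setTI; apply: mhm => //.
  exact: measurable_itv.
have aeb : {ae P, forall w, forall m N i : nat, mcauchy (birkhoff_avg theta (b m N i) w)}.
  apply: ae_forall_nat => m; apply: ae_forall_nat => N; apply: ae_forall_nat => i.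
  apply: ae_cauchy => //.
    exact: measurable_indic.
  exact: integrable_indic.
move: aek aeb; apply: filterS2 => w hkw hbw x hx [phi [cphi [pphi nconv]]].
apply: nconv; apply: mcauchy_cvg; apply: mcauchy_approx => eta eta0.
have [delta d0 hdelta] := unifc cphi (divr_gt0 eta0 (ltr0Sn _ 1)).
have d20 : 0 < delta / 2 by rewrite divr_gt0.
have [m _ hM] := near_infty_natSinv_expn_lt (PosNum d20).
have hm2 : 1 / 2 ^+ m < delta / 2 := hM m (leqnn m).
have [N' _ hN'] := near_infty_natSinv_lt (PosNum d20).
have hN : N'.+1%:R^-1 < delta / 2 := hN' N' (leqnn _).
set N := N'.+1.
exists (fun n => \sum_(i < 2 * N) phi (-1 + i%:R / N%:R) * birkhoff_avg theta (b m N i) w n).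
  apply: (@mcauchy_sum _ _ (fun (i : nat) n => phi (-1 + i%:R / N%:R) * birkhoff_avg theta (b m N i) w n)) => i.
  exact: (@mcauchyZ _ (fun n => birkhoff_avg theta (b m N i) w n) _ (hbw m N i)).
pose u j := phi (rcomp F0 eps kappa theta j w x) -
  \sum_(i < 2 * N) phi (-1 + i%:R / N%:R) * \1_(cell N i) (hm m (iter j theta w)).
have pphi' : forall y, phi (y + 1) = phi y + 0 by move=> y; rewrite addr0.
have hu : forall j, (m <= j)%N -> `|u j| <= eta / 2.
  move=> j mj.
  have hj : j = (j - m + m)%N by rewrite subnK.
  have [ha [k hk']] := dyn hF hper he hkw hx j.
  have [ha' _] := dyn hF hper he hkw hx (j - m)%N.
  rewrite /u hk' (per_int pphi') mulr0 addr0.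
  have hB := Bz_aseq eps kappa thK w x m (j - m)%N.
  have hD := Bz_diff eps kappa thinv m (iter (j - m + m)%N theta w) (aseq eps kappa theta w x (j - m)) 0.
  rewrite -hj in hB hD.
  rewrite hB subr0 in hD.
  rewrite /hm /=.
  set h := Bz eps kappa thinv m (iter j theta w) 0 in hD *.
  set a := aseq eps kappa theta w x j in ha hD *.
  set a' := aseq eps kappa theta w x (j - m) in ha' hD.
  have t1 : 1 <= 2 ^+ m :> R by rewrite exprn_ege1 // ler1n.
  have t0 : 0 < (2 ^+ m : R)^-1 by rewrite invr_gt0 exprn_gt0.
  have t2 : (2 ^+ m : R)^-1 <= 1 by rewrite invf_le1 ?exprn_gt0.
  move: hm2; rewrite div1r => hm2.
  move: ha ha' => /andP[al au] /andP[al' au'].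
  have hq1 : 0 <= a' / 2 ^+ m by rewrite divr_ge0 //; lra.
  have hq2 : a' / 2 ^+ m <= 3/4 by rewrite /= -[a' / _]/(a' * _); nra.
  have hq3 : a' / 2 ^+ m <= (2 ^+ m)^-1 by rewrite -[a' / _]/(a' * _); nra.
  have hh : -1 <= h < 1 by apply/andP; split; lra.
  have [i0 hi0] := grid (ltn0Sn N') hh.
  rewrite (bigD1 i0) //= big1 => [|i ne]; last first.
    by rewrite indicE (hi0 i) (negbTE ne) mulr0.
  rewrite indicE (hi0 i0) eqxx mulr1 addr0.
  have := hi0 i0; rewrite eqxx /cell mem_setE in_itv /= => /andP[c1 c2].
  have f1 : a - h < delta / 2 by lra.
  rewrite /N; move: hN c1 c2.
  set p := -1 + i0%:R / N'.+1%:R.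
  set iN := (N'.+1%:R)^-1 => hN c1 c2.
  apply: ltW; apply: hdelta; first by apply/andP; split; lra.
  rewrite ltr_norml; apply/andP; split; lra.
have [n0 hn0] := avg_small (divr_gt0 eta0 (ltr0Sn _ 1)) hu.
exists n0 => n hn.
have -> : n%:R^-1 * \sum_(j < n) phi (rcomp F0 eps kappa theta j w x) -
   \sum_(i < 2 * N) phi (-1 + i%:R / N%:R) * birkhoff_avg theta (b m N i) w n =
   n%:R^-1 * \sum_(j < n) u j.
  rewrite /u sumrB mulrBr; congr (_ - _).
  rewrite exchange_big mulr_sumr; apply: eq_bigr => i _.
  rewrite /birkhoff_avg mulrCA; congr (_ * _).
  rewrite mulr_sumr; apply: eq_bigr => j _; by rewrite /b !indicE preimE.
have := hn0 n hn; lra.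
Qed.
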